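(* For every $n\ge 4$, $$\mathrm{bdim}(P_n)=\mathrm{bdim}(C_n)=\left\lfloor \frac{2n+2}{5}\right\rfloor,$$ where $P_n$ and $C_n$ are the path and the cycle on $n$ vertices.
   Context: $d(x,y)$ is the distance in $G$. For an integer $k\ge1$ let $d_k(x,y)=\min\{d(x,y),k+1\}$. A function $f:V(G)\to\mathbb{Z}_{\ge 0}$ is a resolving broadcast of $G$ if for all distinct $x,y\in V(G)$ there is $z\in V(G)$ with $f(z)=i>0$ and $d_i(x,z)\ne d_i(y,z)$. The broadcast dimension $\mathrm{bdim}(G)$ is the minimum of $\sum_{v\in V(G)}f(v)$ over all resolving broadcasts $f$ of $G$. *)

(* Defs.v *)
From mathcomp Require Import all_boot.
Set Implicit Arguments. Unset Strict Implicit. Unset Printing Implicit Defensive.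

Section Graphs.
Variable T : finType.
Variable e : rel T.  (* adjacency relation of a (symmetric, irreflexive) graph *)

Fixpoint ball (k : nat) (x : T) : {set T} :=
  match k with
  | 0 => [set x]
  | k'.+1 => ball k' x :|: [set y | [exists z in ball k' x, e z y]]
  end.

(* graph distance: least k with y in ball k x (distance in a connected graph
   on #|T| vertices is always < #|T|, so searching in [0, #|T|) suffices). *)
Definition gdist (x y : T) : nat := find (fun k => y \in ball k x) (iota 0 #|T|).

Definition tdist (k : nat) (x y : T) : nat := minn (gdist x y) k.+1.

Definition resolving_broadcast (f : T -> nat) : Prop :=
  forall x y : T, x != y ->
    exists z : T, 0 < f z /\ tdist (f z) x z != tdist (f z) y z.

Definition is_bdim (b : nat) : Prop :=
  (exists f : T -> nat, resolving_broadcast f /\ \sum_(v : T) f v = b) /\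
  (forall f : T -> nat, resolving_broadcast f -> b <= \sum_(v : T) f v).
End Graphs.

Definition path_adj (n : nat) : rel 'I_n :=
  fun i j => (i.+1 == j :> nat) || (j.+1 == i :> nat).

Definition cycle_adj (n : nat) : rel 'I_n :=
  fun i j => (i.+1 %% n == j :> nat) || (j.+1 %% n == i :> nat).

Arguments path_adj n : clear implicits.
Arguments cycle_adj n : clear implicits.

(* Main.v *)
Require Import Defs.
From mathcomp Require Import all_boot zify.
Set Implicit Arguments. Unset Strict Implicit. Unset Printing Implicit Defensive.

Definition p (v : nat) : bool := (v %% 5 == 1) || (v %% 5 == 3).
Definition Lp n v : bool := (v < n) && (((n %% 5 == 3) && (5 * (n %/ 5) <= v) && (v == 5*(n%/5)+2)) || (~~((n %% 5 == 3) && (5 * (n %/ 5) <= v)) && p v)).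
Definition adjp (x z : nat) : bool := (x.+1 == z) || (z.+1 == x).

Lemma p_shift v : p (v + 5) = p v.
Proof. by rewrite /p modnDr. Qed.
Lemma divS5 n : (n + 5) %/ 5 = (n %/ 5).+1.
Proof. by rewrite divnDr // divnn addn1. Qed.
Lemma modS5 n : (n + 5) %% 5 = n %% 5.
Proof. exact: modnDr. Qed.

Lemma Lp_shift n v : Lp (n + 5) (v + 5) = Lp n v.
Proof.
rewrite /Lp divS5 modS5 p_shift ltn_add2r mulnS.
by rewrite [5 + _]addnC leq_add2r -addnA [5 + 2]addnC addnA eqn_add2r.
Qed.

Lemma Lp_int n v : v < 5 * (n %/ 5) -> Lp n v = p v.
Proof.
move=> h. have hn : v < n.
  apply: leq_trans h _. by rewrite mulnC leq_divM.
by rewrite /Lp hn leqNgt h /= andbF.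
Qed.

Lemma Lp_grow n v : v < 5 * (n %/ 5) -> Lp (n + 5) v = Lp n v.
Proof.
move=> h. rewrite (@Lp_int n v h) (@Lp_int (n + 5) v) // divS5 mulnS. by apply: leq_trans h _; rewrite leq_addl.
Qed.

Definition seenb n x := (x < n) ==> (~~ Lp n x ==>
  ((0 < x) && Lp n (x - 1) || Lp n (x + 1) || (x == 5 * (n %/ 5)) && ((n %% 5 == 1) || (n %% 5 == 3)))).

Definition nearb n x d := ((d == 1) || (d == 2)) ==> ((x + d < n) ==> (~~ Lp n x ==> (~~ Lp n (x + d) ==>
  ((0 < x) && Lp n (x - 1) || (d == 1) && Lp n (x + 2) || (d == 2) && Lp n (x + 3))))).

Lemma sub5 x : 0 < x -> x + 5 - 1 = (x - 1) + 5.
Proof. move=> h; lia. Qed.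
Lemma addAC5 x c : x + 5 + c = (x + c) + 5.
Proof. by rewrite addnAC. Qed.

Lemma seen_shift n x : 0 < x -> seenb (n + 5) (x + 5) = seenb n x.
Proof.
move=> hx. rewrite /seenb sub5 // !addAC5 !Lp_shift ltn_add2r divS5 modS5 hx.
by rewrite mulnS [5 + _]addnC eqn_add2r addn_gt0 orbT.
Qed.

Lemma near_shift n x d : 0 < x -> nearb (n + 5) (x + 5) d = nearb n x d.
Proof.
move=> hx. rewrite /nearb sub5 // !addAC5 !Lp_shift ltn_add2r hx.
by rewrite addn_gt0 orbT.
Qed.

Lemma seen_grow n x : x + 2 <= 5 * (n %/ 5) -> seenb (n + 5) x = seenb n x.
Proof.
move=> h. have hq : 5 * (n %/ 5) <= n by rewrite mulnC leq_divM.
have l1 : Lp (n + 5) x = Lp n x by apply: Lp_grow; lia.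
have l2 : Lp (n + 5) (x - 1) = Lp n (x - 1) by apply: Lp_grow; lia.
have l3 : Lp (n + 5) (x + 1) = Lp n (x + 1) by apply: Lp_grow; lia.
rewrite /seenb l1 l2 l3.
have -> : (x < n + 5) = true by lia. have -> : (x < n) = true by lia.
rewrite divS5 mulnS. have -> : (x == 5 + 5 * (n %/ 5)) = false by lia.
by have -> : (x == 5 * (n %/ 5)) = false by lia.
Qed.

Lemma near_grow n x d : x + 4 <= 5 * (n %/ 5) -> nearb (n + 5) x d = nearb n x d.
Proof.
move=> h. have hq : 5 * (n %/ 5) <= n by rewrite mulnC leq_divM.
rewrite /nearb. case hd: ((d == 1) || (d == 2)) => //=.
have hd' : d <= 2 by lia.
have l1 : Lp (n + 5) x = Lp n x by apply: Lp_grow; lia.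
have l2 : Lp (n + 5) (x - 1) = Lp n (x - 1) by apply: Lp_grow; lia.
have l3 : Lp (n + 5) (x + 2) = Lp n (x + 2) by apply: Lp_grow; lia.
have l4 : Lp (n + 5) (x + 3) = Lp n (x + 3) by apply: Lp_grow; lia.
have l5 : Lp (n + 5) (x + d) = Lp n (x + d) by apply: Lp_grow; lia.
rewrite l1 l2 l3 l4 l5.
have -> : (x + d < n + 5) = true by lia. by have -> : (x + d < n) = true by lia.
Qed.

Lemma seen_fin : all (fun n => all (seenb n) (iota 0 6)) (iota 0 15).
Proof. by []. Qed.
Lemma near_fin : all (fun n => all (fun x => nearb n x 1 && nearb n x 2) (iota 0 6)) (iota 0 15).
Proof. by []. Qed.

Lemma seen_all n x : seenb n x.
Proof.
elim/ltn_ind: x n => x IH n.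
case: (leqP 6 x) => hx.
  case: (leqP n x) => hn; first by rewrite /seenb ltnNge hn.
  have -> : n = (n - 5) + 5 by lia. have -> : x = (x - 5) + 5 by lia.
  rewrite seen_shift; last by lia. apply: IH. lia.
elim/ltn_ind: n => n IHn.
case: (leqP 15 n) => hn.
  have -> : n = (n - 5) + 5 by lia. rewrite seen_grow; first by apply: IHn; lia.
  have : 2 <= (n - 5) %/ 5 by rewrite leq_divRL //; lia. lia.
move/allP: seen_fin => H1. have H2 : all (seenb n) (iota 0 6) by apply: H1; rewrite mem_iota.
move/allP: H2 => H2. by apply: H2; rewrite mem_iota.
Qed.

Lemma near_all n x d : nearb n x d.
Proof.
case hd: ((d == 1) || (d == 2)); last by rewrite /nearb hd.
elim/ltn_ind: x n => x IH n.
case: (leqP 6 x) => hx.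
  case: (leqP n x) => hn; first by rewrite /nearb hd /= ltnNge (leq_trans hn (leq_addr _ _)).
  have -> : n = (n - 5) + 5 by lia. have -> : x = (x - 5) + 5 by lia.
  rewrite near_shift; last by lia. apply: IH. lia.
elim/ltn_ind: n => n IHn.
case: (leqP 15 n) => hn.
  have -> : n = (n - 5) + 5 by lia. rewrite near_grow; first by apply: IHn; lia.
  have : 2 <= (n - 5) %/ 5 by rewrite leq_divRL //; lia. lia.
move/allP: near_fin => H1.
have H2 : all (fun x => nearb n x 1 && nearb n x 2) (iota 0 6) by apply: H1; rewrite mem_iota.
move/allP: H2 => H2. have /andP [h1 h2] : nearb n x 1 && nearb n x 2 by apply: H2; rewrite mem_iota.
by case/orP: hd => /eqP ->.
Qed.

Lemma seen n x : 4 <= n -> x < n -> ~~ Lp n x -> 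
  (0 < x) && Lp n (x - 1) || Lp n (x + 1) || (x == 5 * (n %/ 5)) && ((n %% 5 == 1) || (n %% 5 == 3)).
Proof. move=> _ hx hl. by have := seen_all n x; rewrite /seenb hx hl. Qed.

Lemma near n x d : 4 <= n -> (d == 1) || (d == 2) -> x + d < n -> ~~ Lp n x -> ~~ Lp n (x + d) ->
  (0 < x) && Lp n (x - 1) || (d == 1) && Lp n (x + 2) || (d == 2) && Lp n (x + 3).
Proof. move=> _ hd hx h1 h2. by have := near_all n x d; rewrite /nearb hd hx h1 h2. Qed.

Section Gen.
Variable T : finType.
Variable e : rel T.

Lemma card_sum (P : pred T) : #|[set x | P x]| = \sum_(x : T) (P x : nat).
Proof. rewrite -sum1_card big_mkcond /=; apply: eq_bigr => x _; by rewrite inE; case: (P x). Qed.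

Lemma tdist_far k x z : k < gdist e x z -> tdist e k x z = k.+1.
Proof. by move=> h; rewrite /tdist; apply/minn_idPr. Qed.

Lemma lower (f : T -> nat) :
  (forall z k, #|[set x | gdist e x z <= k]| <= k.*2.+1) ->
  resolving_broadcast e f -> (#|T|).*2 <= 5 * \sum_(v : T) f v + 2.
Proof.
move=> Hball Hres.
pose seen x z := (0 < f z) && (gdist e x z <= f z).
pose c x := #|[set z | seen x z]|.
have H1 : (#|T|).*2 <= \sum_(x : T) ((c x == 0 : nat).*2 + (c x == 1 : nat) + c x).
  rewrite -sum1_card -muln2 big_distrl /=. apply: leq_sum => x _.
  case: (c x) => [|[|m]] //=. 
have U : #|[set x | c x == 0]| <= 1.
  apply/card_le1_eqP => x y; rewrite !inE => /eqP hx /eqP hy.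
  apply/eqP; apply/negP => /negP hxy. have [z [hz hd]] := Hres y x hxy.
  move/eqP: hx; rewrite cards_eq0 => /eqP hx. move/eqP: hy; rewrite cards_eq0 => /eqP hy.
  have nx : ~~ seen x z by apply/negP => hs; move: (in_set0 z); rewrite -hx inE hs.
  have ny : ~~ seen y z by apply/negP => hs; move: (in_set0 z); rewrite -hy inE hs.
  move: nx ny hd; rewrite /seen hz /= -!ltnNge => nx ny.
  by rewrite !tdist_far // eqxx.
have C : \sum_(x : T) c x <= \sum_(z : T) (0 < f z) * (f z).*2.+1.
  rewrite /c. under eq_bigr => x _ do rewrite card_sum.
  rewrite exchange_big /=. apply: leq_sum => z _.
  case hz: (0 < f z); last first.
    by rewrite big1 // => x _; rewrite /seen hz.
  rewrite mul1n -card_sum. apply: leq_trans (Hball z (f z)).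
  apply: subset_leq_card; apply/subsetP => x; rewrite !inE /seen hz //.
have D : \sum_(x : T) (c x == 1 : nat) <= \sum_(z : T) (0 < f z) * (f z).+1.
  have -> : \sum_(x : T) (c x == 1 : nat) = \sum_(x : T) \sum_(z : T) (seen x z && (c x == 1) : nat).
    apply: eq_bigr => x _. case hc: (c x == 1); last by rewrite big1 // => z _; rewrite andbF.
    under eq_bigr => z _ do rewrite andbT. move/eqP: hc => hc; rewrite -card_sum; exact: esym hc.
  rewrite exchange_big /=. apply: leq_sum => z _.
  case hz: (0 < f z); last first.
    by rewrite big1 // => x _; rewrite /seen hz.
  rewrite mul1n -card_sum cardE.
  set s := enum _.
  have -> : size s = size [seq gdist e x z | x <- s] by rewrite size_map.
  rewrite -(size_iota 0 (f z).+1). apply: uniq_leq_size.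
    rewrite map_inj_in_uniq ?enum_uniq // => x y.
    rewrite !mem_enum !inE => /andP [sx cx] /andP [sy cy] hg.
    apply/eqP; apply/negP => /negP hxy. have [z' [hz' hd]] := Hres x y hxy.
    have only : forall w v, seen w z -> c w == 1 -> seen w v -> v = z.
      move=> w v sw /cards1P [a ha] sv.
      have : z \in [set z | seen w z] by rewrite inE.
      have : v \in [set z | seen w z] by rewrite inE.
      by rewrite ha !inE => /eqP -> /eqP ->.
    case: (eqVneq z' z) => [ez|nz].
      by move: hd; rewrite ez /tdist hg eqxx.
    have nx : ~~ seen x z' by apply/negP => h; move: (only _ _ sx cx h); apply/eqP.
    have ny : ~~ seen y z' by apply/negP => h; move: (only _ _ sy cy h); apply/eqP.
    move: nx ny hd; rewrite /seen hz' /= -!ltnNge => nx ny.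
    by rewrite !tdist_far // eqxx.
  move=> k /mapP [x]; rewrite mem_enum inE => /andP [sx _] ->.
  rewrite mem_iota add0n ltnS. by case/andP: sx.
have U' : \sum_(x : T) (c x == 0 : nat) <= 1 by rewrite -card_sum.
have S0 : \sum_(x : T) (c x == 0 : nat).*2 = (\sum_(x : T) (c x == 0 : nat)) * 2.
  rewrite big_distrl /=; apply: eq_bigr => x _; by rewrite muln2.
have F : \sum_(z : T) (0 < f z) * (f z).+1 + \sum_(z : T) (0 < f z) * (f z).*2.+1 <= 5 * \sum_(v : T) f v.
  rewrite -big_split big_distrr /= leq_sum // => z _.
  case: (f z) => [|m] //=; rewrite mul1n. lia.
move: H1; rewrite !big_split /= S0. lia.
Qed.
End Gen.

Section Ds.
Variable T : finType.
Variable e : rel T.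

Lemma code x z : 1 < #|T| ->
  tdist e 1 x z = if z == x then 0 else if e x z then 1 else 2.
Proof.
move=> hT. rewrite /tdist /gdist. case: #|T| hT => [|[|N]] // _.
rewrite /= !inE. case: (z == x) => //=.
have -> : [exists z0 in [set x], e z0 z] = e x z.
  apply/existsP/idP => [[w /andP [] ]|h]; first by rewrite inE => /eqP ->.
  by exists x; rewrite inE eqxx.
by case: (e x z).
Qed.

Lemma dist_lb (h : T -> T -> nat) :
  (forall x, h x x = 0) -> (forall x y w, e w y -> h x y <= (h x w).+1) ->
  (forall x y, h x y < #|T|) -> forall x y, h x y <= gdist e x y.
Proof.
move=> h0 hs hb.
have B : forall k x y, y \in ball e k x -> h x y <= k.
  elim=> [|k IH] x y /=; first by rewrite inE => /eqP ->; rewrite h0.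
  rewrite inE => /orP [/IH|]; first by move=> H; apply: leq_trans H _.
  rewrite inE => /existsP [w /andP [hw hwy]].
  apply: leq_trans (hs _ _ _ hwy) _. by rewrite ltnS IH.
move=> x y. rewrite /gdist.
set P := (fun k => y \in ball e k x).
case hh: (has P (iota 0 #|T|)).
  have := nth_find 0 hh. rewrite nth_iota ?add0n; last by move: hh; rewrite has_find size_iota.
  exact: B.
have := hb x y; by rewrite has_find size_iota in hh; move: (find_size P (iota 0 #|T|)); rewrite size_iota; lia.
Qed.

Lemma card_inj (A : {set T}) (g : T -> nat) m :
  {in A &, injective g} -> (forall x, x \in A -> g x < m) -> #|A| <= m.
Proof.
move=> gi gb. rewrite cardE -(size_map g) -(size_iota 0 m).
apply: uniq_leq_size.
  rewrite map_inj_in_uniq ?enum_uniq // => x y; rewrite !mem_enum; exact: gi.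
move=> k /mapP [x]; rewrite mem_enum => hx ->. by rewrite mem_iota add0n gb.
Qed.
End Ds.

Lemma path_lower n (f : 'I_n -> nat) : resolving_broadcast (path_adj n) f ->
  n.*2 <= 5 * \sum_(v : 'I_n) f v + 2.
Proof.
move=> hr. rewrite -{1}(card_ord n). apply: lower hr => z k.
pose h (x y : 'I_n) := (x - y) + (y - x).
have hl : forall x y, h x y <= gdist (path_adj n) x y.
  apply: dist_lb.
  - by move=> x; rewrite /h subnn.
  - move=> x y w; rewrite /path_adj /h => /orP [/eqP|/eqP]; lia.
  - move=> x y; rewrite card_ord /h; have := ltn_ord x; have := ltn_ord y; lia.
apply: (card_inj (g := fun x : 'I_n => x + k - z)).
  move=> x y; rewrite !inE => hx hy hg. apply: val_inj => /=.
  have := hl x z; have := hl y z; rewrite /h; lia.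
move=> x; rewrite inE => hx; have := hl x z; rewrite /h; lia.
Qed.

Lemma succ_mod n w : w < n -> w.+1 %% n = if w.+1 == n then 0 else w.+1.
Proof.
move=> hw. case: ifP => [/eqP ->|/negbT h]; first by rewrite modnn.
rewrite modn_small //. lia.
Qed.

Lemma cycle_lower n (f : 'I_n -> nat) : resolving_broadcast (cycle_adj n) f ->
  n.*2 <= 5 * \sum_(v : 'I_n) f v + 2.
Proof.
move=> hr. rewrite -{1}(card_ord n). apply: lower hr => z k.
pose dd (a b : 'I_n) := if b <= a then a - b else n + a - b.
pose h (x y : 'I_n) := minn (dd x y) (dd y x).
have hl : forall x y, h x y <= gdist (cycle_adj n) x y.
  apply: dist_lb.
  - by move=> x; rewrite /h /dd leqnn subnn.
  - move=> x y w; rewrite /cycle_adj /h /dd !succ_mod //.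
    have := ltn_ord x; have := ltn_ord y; have := ltn_ord w.
    repeat case: ifP => ?; lia.
  - move=> x y; rewrite card_ord /h /dd; have := ltn_ord x; have := ltn_ord y.
    repeat case: ifP => ?; lia.
pose g (x : 'I_n) := if dd x z <= k then k + dd x z else k - dd z x.
apply: (card_inj (g := g)).
  move=> x y; rewrite !inE => hx hy hg; apply: val_inj => /=.
  move: hg (hl x z) (hl y z) (ltn_ord x) (ltn_ord y) (ltn_ord z) hx hy.
  rewrite /g /h /dd /=.
  case: (leqP z x) => ?; case: (leqP x z) => ?; case: (leqP z y) => ?; case: (leqP y z) => ? /=;
  repeat case: ifP => ?; lia.
move=> x; rewrite inE => hx; have := hl x z; rewrite /g /h /dd.
case: (leqP z x) => ?; case: (leqP x z) => ? /=; repeat case: ifP => ?; lia.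
Qed.

Lemma p_q q c : p (q * 5 + c) = p c.
Proof. by rewrite /p modnMDl. Qed.

Lemma count_p q : count p (iota 0 (q * 5)) = q.*2.
Proof.
elim: q => [|q IH] //. rewrite mulSn addnC iotaD count_cat IH add0n.
rewrite -[q * 5]addn0 iotaDl count_map.
rewrite (@eq_count _ _ p); last by move=> c; rewrite /preim /= p_q.
by rewrite doubleS addn2.
Qed.

Lemma Lp_qr n q r v : n = q * 5 + r -> r < 5 ->
  Lp n v = (v < q * 5 + r) && ((r == 3) && (q * 5 <= v) && (v == q * 5 + 2) || ~~((r == 3) && (q * 5 <= v)) && p v).
Proof.
move=> -> hr. rewrite /Lp divnMDl // modnMDl (divn_small hr) (modn_small hr) addn0.
by rewrite mulnC.
Qed.

Lemma count_Lp n : 4 <= n -> count (Lp n) (iota 0 n) = (2 * n + 2) %/ 5.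
Proof.
move=> hn. have En := divn_eq n 5. have hr := ltn_pmod n (isT : 0 < 5).
move: (n %/ 5) (n %% 5) En hr => q r En hr.
rewrite (eq_count (fun v => Lp_qr v En hr)) En iotaD count_cat add0n.
rewrite (@eq_in_count _ _ p); last first.
  move=> v; rewrite mem_iota add0n => /andP [_ hv].
  have -> : (v < q * 5 + r) = true by apply: leq_trans hv (leq_addr _ _).
  have -> : (q * 5 <= v) = false by rewrite leqNgt hv.
  by rewrite andbF.
rewrite count_p -[q * 5]addn0 iotaDl count_map addn0.
rewrite (@eq_count _ _ (fun c => (c < r) && ((r == 3) && (c == 2) || ~~ (r == 3) && p c))); last first.
  move=> c; rewrite /preim /= ltn_add2l leq_addr eqn_add2l p_q.
  by rewrite andbT.
have -> : 2 * (q * 5 + r) + 2 = q.*2 * 5 + (2 * r + 2) by lia.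
rewrite divnMDl //.
have : r = 0 \/ r = 1 \/ r = 2 \/ r = 3 \/ r = 4 by lia.
by case=> [->|[->|[->|[->|->]]]].
Qed.

Definition codeP x z := if z == x then 0 else if adjp x z then 1 else 2.

Lemma pathres n x y : 4 <= n -> x < n -> y < n -> x != y ->
  exists z, [/\ z < n, Lp n z & codeP x z != codeP y z].
Proof.
move=> hn.
wlog xy : x y / x < y.
  move=> W hx hy hxy. case: (ltngtP x y) => h; first exact: W.
    have [z [hz lz cz]] := W y x h hy hx (negbT (ltn_eqF h)). by exists z; split; rewrite // eq_sym.
  by rewrite h eqxx in hxy.
move=> hx hy hxy.
case lx: (Lp n x). exists x; split => //. rewrite /codeP eqxx. repeat case: ifP; lia.
case ly: (Lp n y). exists y; split => //. rewrite /codeP eqxx. repeat case: ifP; lia.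
have [d1|] := eqVneq y x.+1.
  have := @near n x 1 hn isT. rewrite addn1 -d1 => /(_ hy (negbT lx) (negbT ly)) /=.
  rewrite orbF; case/orP => [/andP [x0 l]|l].
    exists (x - 1); split => //; first lia. rewrite /codeP /adjp. repeat case: ifP; lia.
  exists (x + 2); split => //; first by move: l; rewrite /Lp; case/andP.
  rewrite /codeP /adjp. repeat case: ifP; lia.
move=> d1. have [d2|d2'] := eqVneq y x.+2.
  have := @near n x 2 hn isT. rewrite addn2 -d2 => /(_ hy (negbT lx) (negbT ly)) /=.
  rewrite orbF; case/orP => [/andP [x0 l]|l].
    exists (x - 1); split => //; first lia. rewrite /codeP /adjp. repeat case: ifP; lia.
  exists (x + 3); split => //; first by move: l; rewrite /Lp; case/andP.
  rewrite /codeP /adjp. repeat case: ifP; lia.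
have far : x + 3 <= y by lia.
have := @seen n x hn hx (negbT lx). case/orP => [/orP [/andP [x0 l]|l]|u].
- exists (x - 1); split => //; first lia. rewrite /codeP /adjp. repeat case: ifP; lia.
- exists (x + 1); split => //; first by move: l; rewrite /Lp; case/andP.
  rewrite /codeP /adjp. repeat case: ifP; lia.
have := @seen n y hn hy (negbT ly). case/orP => [/orP [/andP [x0 l]|l]|u'].
- exists (y - 1); split => //; first lia. rewrite /codeP /adjp. repeat case: ifP; lia.
- exists (y + 1); split => //; first by move: l; rewrite /Lp; case/andP.
  rewrite /codeP /adjp. repeat case: ifP; lia.
move: u u'; lia.
Qed.

Lemma succ_mod' n w : w < n -> w.+1 %% n = if w.+1 == n then 0 else w.+1.
Proof.
move=> hw. case: ifP => [/eqP ->|/negbT h]; first by rewrite modnn.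
rewrite modn_small //. lia.
Qed.

Definition codeC n x z := if z == x then 0 else if (x.+1 %% n == z) || (z.+1 %% n == x) then 1 else 2.

Definition code3 (A B : bool) := if A then 0 else if B then 1 else 2.
Lemma code3NE A1 B1 A2 B2 : (code3 A1 B1 != code3 A2 B2) = ((A1 (+) A2) || (~~A1 && ~~A2 && (B1 (+) B2))).
Proof. by case: A1; case: A2; case: B1; case: B2. Qed.

Lemma cadjE n a b : 3 <= n -> a < n -> b < n ->
  (a.+1 %% n == b) || (b.+1 %% n == a) = adjp a b || (a == n.-1) && (b == 0) || (b == n.-1) && (a == 0).
Proof.
move=> hn ha hb; rewrite /adjp !succ_mod' //.
case: ifP => /eqP h1; case: ifP => /eqP h2; lia.
Qed.

Lemma codeCP n a b : 3 <= n -> a < n -> b < n ->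
  ~~ ((a == 0) && (b == n.-1)) -> ~~ ((b == 0) && (a == n.-1)) -> codeC n a b = codeP a b.
Proof.
move=> hn ha hb h1 h2. rewrite /codeC /codeP cadjE //.
have -> : (a == n.-1) && (b == 0) = false by rewrite andbC; apply/negbTE.
have -> : (b == n.-1) && (a == 0) = false by rewrite andbC; apply/negbTE.
by rewrite !orbF.
Qed.

Lemma cycres n x y : 5 <= n -> x < n -> y < n -> x != y ->
  exists z, [/\ z < n, Lp n z & codeC n x z != codeC n y z].
Proof.
move=> hn.
wlog xy : x y / (x == 0) || (y != 0).
  move=> W hx hy hxy. case: (boolP ((x == 0) || (y != 0))) => h; first exact: W.
  have h' : (y == 0) || (x != 0) by move: h; case: (y == 0); case: (x == 0).
  have hyx : y != x by rewrite eq_sym.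
  have [z [hz lz cz]] := W y x h' hy hx hyx.
  by exists z; split; rewrite // eq_sym.
move=> hx hy hxy.
have [z [hz lz cz]] := pathres (leq_trans (isT : 4 <= 5) hn) hx hy hxy.
have l1 : Lp n 1.
  rewrite /Lp /p. have En := divn_eq n 5. have hr := ltn_pmod n (isT : 0 < 5). lia.
have l0 : Lp n 0 = false.
  rewrite /Lp /p. have En := divn_eq n 5. have hr := ltn_pmod n (isT : 0 < 5). lia.
have z0 : z != 0 by apply/eqP => e0; rewrite e0 l0 in lz.
have n3 : 3 <= n by lia.
have [ez|nz] := eqVneq z n.-1; last first.
  exists z; split => //. rewrite !codeCP //; by rewrite ?(negbTE nz) ?(negbTE z0) ?andbF.
have [ex|nx] := eqVneq x 0; last first.
  have ny : y != 0 by move: xy; rewrite (negbTE nx).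
  exists z; split => //. rewrite !codeCP //; by rewrite ?(negbTE nx) ?(negbTE ny) ?(negbTE z0) ?andbF.
subst x z.
have hy0 : y != 0 by rewrite eq_sym.
have c0 : codeP 0 n.-1 = 2.
  rewrite /codeP /adjp. have -> : (n.-1 == 0) = false by lia.
  have -> : (0.+1 == n.-1) = false by lia. by have -> : (n.-1.+1 == 0) = false by lia.
have [ey|ny] := eqVneq y n.-1.
  exists n.-1; split; [lia|by []|]. subst y.
  rewrite /codeC eqxx. have -> : (n.-1 == 0) = false by lia. 
  have -> : (0 .+1 %% n == n.-1) = false by rewrite modn_small; lia.
  have -> : (n.-1.+1 %% n == 0) = true by rewrite prednK ?modnn //; lia.
  by [].
have [ey2|ny2] := eqVneq y n.-2; last first.
  exfalso. have cy : codeP y n.-1 = 2.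
    rewrite /codeP /adjp. have -> : (n.-1 == y) = false by rewrite eq_sym; apply/negbTE.
    have -> : (y.+1 == n.-1) = false by lia. by have -> : (n.-1.+1 == y) = false by lia.
  by move: cz; rewrite c0 cy.
exists 1; split; [lia|by []|]. subst y.
rewrite /codeC. have -> : (1 == 0) = false by []. have -> : (1 == n.-2) = false by lia.
have -> : (0 .+1 %% n == 1) = true by rewrite modn_small //; lia.
have -> : (n.-2.+1 %% n == 1) = false by rewrite modn_small; lia.
have -> : (2 %% n == n.-2) = false by rewrite modn_small; lia.
by [].
Qed.

Lemma sum_count n (P : pred nat) : \sum_(v : 'I_n) (P v : nat) = count P (iota 0 n).
Proof.
rewrite -(big_mkord xpredT (fun v => (P v : nat))) -sum1_count big_mkcond /=.
rewrite /index_iota subn0 [RHS]big_mkcond. by apply: eq_bigr => i _; case: (P i).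
Qed.

Lemma path_ok n : 4 <= n -> is_bdim (path_adj n) ((2 * n + 2) %/ 5).
Proof.
move=> hn. split.
  exists (fun v : 'I_n => (Lp n v : nat)). split; last by rewrite sum_count count_Lp.
  move=> x y hxy. have [z [hz lz cz]] := pathres hn (ltn_ord x) (ltn_ord y) hxy.
  exists (Ordinal hz) => /=. rewrite lz /=; split => //.
  have h1 : 1 < #|'I_n| by rewrite card_ord; lia.
  by rewrite !code.
move=> f hf. have := path_lower hf; rewrite -muln2.
move: (\sum_(v < n) f v) => s; lia.
Qed.

Lemma c4 x y : x < 4 -> y < 4 -> x != y ->
  has (fun z => (z <= 1) && (codeC 4 x z != codeC 4 y z)) [:: 0; 1].
Proof. by case: x => [|[|[|[|x]]]] //; case: y => [|[|[|[|y]]]]. Qed.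

Lemma cycle_ok n : 4 <= n -> is_bdim (cycle_adj n) ((2 * n + 2) %/ 5).
Proof.
move=> hn. split; last by move=> f hf; have := cycle_lower hf; rewrite -muln2; move: (\sum_(v < n) f v) => s; lia.
case: (eqVneq n 4) => [e4|n4].
  subst n. exists (fun v : 'I_4 => (v <= 1 : nat)). split; last by rewrite (sum_count 4 (fun v => v <= 1)).
  move=> x y hxy. have /hasP [z zin /andP [lz cz]] := c4 (ltn_ord x) (ltn_ord y) hxy.
  have hz : z < 4 by move: zin; rewrite !inE => /orP [/eqP ->|/eqP ->].
  exists (Ordinal hz) => /=. rewrite lz /=; split => //.
  by rewrite !code ?card_ord.
have hn5 : 5 <= n by lia.
exists (fun v : 'I_n => (Lp n v : nat)). split; last by rewrite sum_count count_Lp.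
move=> x y hxy. have [z [hz lz cz]] := cycres hn5 (ltn_ord x) (ltn_ord y) hxy.
exists (Ordinal hz) => /=. rewrite lz /=; split => //.
have h1 : 1 < #|'I_n| by rewrite card_ord; lia.
  by rewrite !code.
Qed.

Theorem mainTheorem2 (n : nat) (hn : 4 <= n) :
  is_bdim (path_adj n) ((2 * n + 2) %/ 5) /\
  is_bdim (cycle_adj n) ((2 * n + 2) %/ 5).
Proof. split; [exact: path_ok | exact: cycle_ok]. Qed.
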